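(* For every integer $n\ge 3$, $$\gamma_t(C_n\times C_4)=\gamma_p(C_n\times C_4)=\begin{cases} n, & \text{if } n\equiv 0 \pmod 4,\\ n+1, & \text{if } n\equiv 1,3 \pmod 4,\\ n+2, & \text{if } n\equiv 2\pmod 4.\end{cases}$$
   Context: All graphs are finite, simple and undirected. $C_n$ denotes the cycle of order $n$ and $G\times H$ the Cartesian product of graphs. For a graph $G$ without isolated vertices: a set $D\subseteq V(G)$ is a total dominating set if every vertex of $G$ (including those in $D$) has a neighbour in $D$; $\gamma_t(G)$ is the minimum size of a total dominating set. A set $D\subseteq V(G)$ is a paired dominating set if every vertex outside $D$ has a neighbour in $D$ and the induced subgraph $G[D]$ has a perfect matching; $\gamma_p(G)$ is the minimum size of a paired dominating set. *)

(* Defs.v *)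
From mathcomp Require Import all_boot.
Set Implicit Arguments. Unset Strict Implicit. Unset Printing Implicit Defensive.

(* cycle C_n on 'I_n : i ~ j iff j = i+1 mod n or i = j+1 mod n (simple for n >= 3) *)
Definition cycle_adj (n : nat) : rel 'I_n :=
  fun i j => (j == (i.+1 %% n) :> nat) || (i == (j.+1 %% n) :> nat).

Definition cart_adj (T U : finType) (e : rel T) (f : rel U) : rel (T * U) :=
  fun x y => ((x.1 == y.1) && f x.2 y.2) || ((x.2 == y.2) && e x.1 y.1).

Definition total_dominating (T : finType) (e : rel T) (D : {set T}) : Prop :=
  forall v : T, exists2 u, u \in D & e v u.

(* G[D] has a perfect matching: a fixed-point-free involution of D along edges *)
Definition has_perfect_matching (T : finType) (e : rel T) (D : {set T}) : Prop :=
  exists m : T -> T, forall x, x \in D ->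
    [/\ m x \in D, e x (m x) & m (m x) = x].

Definition paired_dominating (T : finType) (e : rel T) (D : {set T}) : Prop :=
  (forall v : T, v \notin D -> exists2 u, u \in D & e v u) /\
  has_perfect_matching e D.

Definition is_min_card (T : finType) (P : {set T} -> Prop) (k : nat) : Prop :=
  (exists D, P D /\ #|D| = k) /\ (forall D, P D -> k <= #|D|).

Definition CnC4_adj (n : nat) : rel ('I_n * 'I_4) :=
  cart_adj (@cycle_adj n) (@cycle_adj 4).

Definition gamma_value (n : nat) : nat :=
  if n %% 4 == 0 then n else if n %% 4 == 2 then n + 2 else n + 1.

(* Main.v *)
Require Import Defs.
From mathcomp Require Import all_boot zify.
Set Implicit Arguments. Unset Strict Implicit. Unset Printing Implicit Defensive.

Definition bit (c j : nat) : bool := odd (c %/ 2 ^ j).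
Definition vj (a b c j : nat) : bool :=
  [|| bit b ((j + 1) %% 4), bit b ((j + 3) %% 4), bit a j | bit c j].
Definition validn (a b c : nat) : bool := [&& vj a b c 0, vj a b c 1, vj a b c 2 & vj a b c 3].
Definition sz (c : nat) : nat := bit c 0 + bit c 1 + bit c 2 + bit c 3.
Definition exc (a b c : nat) : nat := 2 * sz b + sz a + sz c - 4.

Definition table := seq (seq (seq (seq bool))).
Definition inR (t : table) a b k x : bool :=
  nth false (nth [::] (nth [::] (nth [::] t a) b) k) x.
Definition setR (t : table) a b k x : table :=
  let ta := nth [::] t a in let tb := nth [::] ta b in let tk := nth [::] tb k in
  set_nth [::] t a (set_nth [::] ta b (set_nth [::] tb k (set_nth false tk x true))).
Definition init : table := nseq 16 (nseq 16 (nseq 4 (nseq 8 false))).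

Definition vlist (a b : nat) : seq (nat * nat) :=
  [seq (c, exc a b c) | c <- iota 0 16 & validn a b c].
Definition vtab : seq (seq (seq (nat * nat))) :=
  [seq [seq vlist a b | b <- iota 0 16] | a <- iota 0 16].
Definition vget (V : seq (seq (seq (nat * nat)))) a b := nth [::] (nth [::] V a) b.

Definition node := (nat * nat * nat * nat)%type.
Definition succs V (a b k x : nat) : seq node :=
  [seq (b, p.1, (k + 1) %% 4, x + p.2) | p <- vget V a b & x + p.2 < 8].

Fixpoint bfs V (fuel : nat) (t : table) (w : seq node) : table :=
  match fuel with 0 => t | S f =>
  match w with [::] => t | (a, b, k, x) :: w' =>
    let nw := [seq nd <- succs V a b k x | ~~ inR t nd.1.1.1 nd.1.1.2 nd.1.2 nd.2] in
    bfs V f (foldl (fun t nd => setR t nd.1.1.1 nd.1.1.2 nd.1.2 nd.2) t nw) (nw ++ w')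
  end end.

Definition alli {A} (f : nat -> A -> bool) (s : seq A) : bool :=
  all (fun p => f p.1 p.2) (zip (iota 0 (size s)) s).

Definition chk V (t : table) a b k x : bool :=
  all (fun p => (8 <= x + p.2) || inR t b p.1 ((k + 1) %% 4) (x + p.2)) (vget V a b).

Definition closedR V (t : table) : bool :=
  alli (fun a ta => alli (fun b tb => alli (fun k tk => alli (fun x v =>
     if v then chk V t a b k x else true) tk) tb) ta) t.

Definition okstart V a0 b0 : bool :=
  let t := bfs V 2000 (setR init a0 b0 0 0) [:: (a0, b0, 0, 0)] in
  [&& inR t a0 b0 0 0, closedR V t, ~~ inR t a0 b0 1 0, ~~ inR t a0 b0 2 0,
      ~~ inR t a0 b0 3 0 & ~~ inR t a0 b0 2 4].

Definition okall : bool :=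
  let V := vtab in all (fun a => all (fun b => okstart V a b) (iota 0 16)) (iota 0 16).

Lemma okallT : okall.
Proof. vm_compute. reflexivity. Qed.

Lemma alliP A (f : nat -> A -> bool) s d i : alli f s -> i < size s -> f i (nth d s i).
Proof.
rewrite /alli => /(all_nthP (0, d)) H Hi.
have := H i; rewrite size_zip size_iota minnn => /(_ Hi).
by rewrite nth_zip ?size_iota // nth_iota.
Qed.

Lemma nth_lt A (d : A) s i : nth d s i <> d -> i < size s.
Proof. by case: (ltnP i (size s)) => // H; rewrite nth_default. Qed.

Lemma closedR_chk V t a b k x : closedR V t -> inR t a b k x -> chk V t a b k x.
Proof.
rewrite /closedR /inR => Hc Hin.
have Hx : x < size (nth [::] (nth [::] (nth [::] t a) b) k).
  by apply: (nth_lt (d := false)); rewrite Hin.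
have Hk : k < size (nth [::] (nth [::] t a) b).
  by apply: (nth_lt (d := [::])) => E; rewrite E in Hx.
have Hb : b < size (nth [::] t a).
  by apply: (nth_lt (d := [::])) => E; rewrite E in Hk.
have Ha : a < size t.
  by apply: (nth_lt (d := [::])) => E; rewrite E in Hb.
have := alliP [::] Hc Ha => /= H1.
have := alliP [::] H1 Hb => /= H2.
have := alliP [::] H2 Hk => /= H3.
have := alliP false H3 Hx => /=.
by rewrite Hin.
Qed.

Lemma vtabE a b : a < 16 -> b < 16 -> vget vtab a b = vlist a b.
Proof.
move=> Ha Hb; rewrite /vget /vtab (nth_map 0) ?size_iota // nth_iota //.
by rewrite (nth_map 0) ?size_iota // nth_iota.
Qed.

Lemma ok_at a b : a < 16 -> b < 16 -> okstart vtab a b.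
Proof.
move=> Ha Hb; have := okallT; rewrite /okall => /allP /(_ a).
rewrite mem_iota Ha => /(_ isT) /allP /(_ b); rewrite mem_iota Hb; exact.
Qed.

Lemma valid_ge4 a b c : a < 16 -> b < 16 -> c < 16 -> validn a b c ->
  4 <= 2 * sz b + sz a + sz c.
Proof.
have H : all (fun a => all (fun b => all (fun c => validn a b c ==> (4 <= 2 * sz b + sz a + sz c))
   (iota 0 16)) (iota 0 16)) (iota 0 16) by vm_compute.
move=> Ha Hb Hc Hv.
move/allP: H => /(_ a); rewrite mem_iota Ha => /(_ isT) /allP /(_ b).
rewrite mem_iota Hb => /(_ isT) /allP /(_ c); rewrite mem_iota Hc => /(_ isT).
by rewrite Hv.
Qed.

Fixpoint sumf (F : nat -> nat) j := if j is j'.+1 then sumf F j' + F j' else 0.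

Lemma walk (f : nat -> nat) n : (forall k, f k < 16) -> (forall k, f (k + n) = f k) ->
  (forall k, validn (f k) (f (k + 1)) (f (k + 2))) ->
  gamma_value n <= sumf (fun k => sz (f k)) n.
Proof.
move=> Hlt Hper Hv.
set E := sumf (fun k => exc (f k) (f (k + 1)) (f (k + 2))).
set P := sumf (fun k => sz (f (k + 1))).
have Hid : forall j, 4 * P j + sz (f 0) + sz (f (j + 1)) = 4 * j + E j + sz (f 1) + sz (f j).
  elim=> [|j IH]; first by rewrite /= add0n addnC.
  have HPs : P j.+1 = P j + sz (f (j + 1)) by [].
  have HEs : E j.+1 = E j + exc (f j) (f (j + 1)) (f (j + 2)) by [].
  rewrite HPs HEs.
  have H4 := valid_ge4 (Hlt j) (Hlt (j + 1)) (Hlt (j + 2)) (Hv j).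
  rewrite /exc. have -> : j.+1 + 1 = j + 2 by lia.
  have -> : j.+1 = j + 1 by lia.
  lia.
have Hok := ok_at (Hlt 0) (Hlt 1).
move: Hok; rewrite /okstart.
set t := bfs _ _ _ _ => /and5P [H0 Hcl Hb1 Hb2 /andP [Hb3 Hb4]].
have Hinv : forall j, 8 <= E j \/ inR t (f j) (f (j + 1)) (j %% 4) (E j).
  elim=> [|j IH]; first by right; rewrite /= add0n.
  have HEs : E j.+1 = E j + exc (f j) (f (j + 1)) (f (j + 2)) by [].
  case: IH => [H8|Hin]; first by left; rewrite HEs; lia.
  have := closedR_chk Hcl Hin; rewrite /chk => /allP.
  move=> /(_ (f (j + 2), exc (f j) (f (j + 1)) (f (j + 2)))).
  rewrite vtabE ?Hlt // /vlist.
  have Hm : (f (j + 2), exc (f j) (f (j + 1)) (f (j + 2))) \in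
      [seq (c, exc (f j) (f (j + 1)) c) | c <- iota 0 16 & validn (f j) (f (j + 1)) c].
    by apply: map_f; rewrite mem_filter Hv mem_iota Hlt.
  move=> /(_ Hm) /orP [H8|H]; [left | right]; rewrite HEs //.
  rewrite modnDml /= in H.
  have -> : j.+1 + 1 = j + 2 by lia.
  by rewrite -(addn1 j).
have HPn : P n = sumf (fun k => sz (f k)) n.
  have G : forall j, P j + sz (f 0) = sumf (fun k => sz (f k)) j + sz (f j).
    elim=> [|j IH]; first by rewrite /= add0n. have HPs : P j.+1 = P j + sz (f (j + 1)) by []. rewrite HPs /= addn1; lia.
  have := G n; have := Hper 0; rewrite add0n => ->; lia.
have Hf0 : f n = f 0 by have := Hper 0; rewrite add0n.
have Hf1 : f (n + 1) = f 1 by have := Hper 1; rewrite addnC.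
have Hid' := Hid n.
rewrite Hf0 Hf1 in Hid'.
rewrite -HPn /gamma_value.
case: (ltnP (E n) 8) => H8; last by case: (n %% 4 == 0); case: (n %% 4 == 2); lia.
have Hin : inR t (f 0) (f 1) (n %% 4) (E n).
  by case: (Hinv n) => [H|]; [lia | rewrite Hf0 Hf1].
have HE : E n = 0 \/ E n = 4 by lia.
have Hr : n %% 4 < 4 by rewrite ltn_mod.
move: Hin Hr; case: (n %% 4) => [|[|[|[|r]]]] Hin Hr //=.
- lia.
- case: HE => HE; last lia. by rewrite HE in Hin; rewrite Hin in Hb1.
- case: HE => HE; [by rewrite HE in Hin; rewrite Hin in Hb2 | by rewrite HE in Hin; rewrite Hin in Hb4].
- case: HE => HE; last lia. by rewrite HE in Hin; rewrite Hin in Hb3.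
Qed.


Definition code (g : nat -> bool) : nat := g 0 + 2 * g 1 + 4 * g 2 + 8 * g 3.

Lemma bit_code g j : j < 4 -> bit (code g) j = g j.
Proof.
by case: j => [|[|[|[|j]]]] // _; rewrite /code;
  case: (g 0); case: (g 1); case: (g 2); case: (g 3).
Qed.

Lemma code_lt g : code g < 16.
Proof. by rewrite /code; case: (g 0); case: (g 1); case: (g 2); case: (g 3). Qed.

Definition colc m (D : {set 'I_m.+1 * 'I_4}) (k : nat) : nat :=
  code (fun j => (inord (k %% m.+1), inord j) \in D).

Lemma colc_eqmod m (D : {set 'I_m.+1 * 'I_4}) a b : a %% m.+1 = b %% m.+1 -> @colc m D a = colc D b.
Proof. by rewrite /colc => ->. Qed.

Lemma colc_mod m (D : {set 'I_m.+1 * 'I_4}) k : @colc m D (k %% m.+1) = colc D k.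
Proof. by apply: colc_eqmod; rewrite modn_mod. Qed.

Lemma memD m (D : {set 'I_m.+1 * 'I_4}) (i : 'I_m.+1) (j : 'I_4) : ((i, j) \in D) = bit (@colc m D i) j.
Proof. by rewrite /colc bit_code ?ltn_ord //= modn_small ?ltn_ord // !inord_val. Qed.

Lemma total_valid m (D : {set 'I_m.+1 * 'I_4}) :
  total_dominating (@CnC4_adj m.+1) D ->
  forall k, validn (colc D k) (colc D (k + 1)) (colc D (k + 2)).
Proof.
move=> HT k.
have Hj : forall j, j < 4 -> vj (colc D k) (colc D (k + 1)) (colc D (k + 2)) j.
  move=> j Hj.
  have Hi : (k + 1) %% m.+1 < m.+1 by rewrite ltn_mod.
  have [[u1 u2] Hu Hadj] := HT (inord ((k + 1) %% m.+1), inord j).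
  rewrite /CnC4_adj /cart_adj /= in Hadj.
  rewrite /vj.
  case/orP: Hadj => /andP [/eqP He Ha].
  + have Hc : colc D u1 = colc D (k + 1) by rewrite -He inordK // colc_mod.
    rewrite memD Hc in Hu.
    rewrite /cycle_adj inordK // in Ha.
    have Hu2 := ltn_ord u2.
    case/orP: Ha => /eqP Ha.
    * have -> : (j + 1) %% 4 = u2 by clear -Ha Hj Hu2; lia.
      by rewrite Hu.
    * have -> : (j + 3) %% 4 = u2 by clear -Ha Hj Hu2; lia.
      by rewrite Hu orbT.
  + rewrite -He memD inordK // in Hu.
    rewrite /cycle_adj inordK // in Ha.
    case/orP: Ha => /eqP Ha.
    * have Hc : colc D u1 = colc D (k + 2).
        by apply: colc_eqmod; rewrite Ha modn_mod -addn1 modnDml -addnA.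
      by rewrite Hc in Hu; rewrite Hu !orbT.
    * have Hc : colc D u1 = colc D k.
        apply: colc_eqmod; apply/eqP.
        by rewrite -(eqn_modDr 1) !addn1 -Ha addn1.
      by rewrite Hc in Hu; rewrite Hu !orbT.
by rewrite /validn !Hj.
Qed.

Lemma modS_mod x N : (x %% N).+1 %% N = x.+1 %% N.
Proof. by rewrite -[(x %% N).+1]addn1 -[x.+1]addn1 modnDml. Qed.

Lemma valid_total m (D : {set 'I_m.+1 * 'I_4}) :
  (forall k, validn (colc D k) (colc D (k + 1)) (colc D (k + 2))) ->
  total_dominating (@CnC4_adj m.+1) D.
Proof.
move=> HV [i j].
set k := i + m.
have Hk1 : colc D (k + 1) = colc D i.
  by apply: colc_eqmod; rewrite /k -addnA addn1 modnDr.
have Hk2 : colc D (k + 2) = colc D ((i + 1) %% m.+1).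
  rewrite colc_mod; apply: colc_eqmod.
  have -> : k + 2 = (i + 1) + m.+1 by rewrite /k; clear; lia.
  by rewrite modnDr.
have Hk0 : colc D k = colc D ((i + m) %% m.+1) by rewrite colc_mod.
have HVk := HV k; rewrite /validn in HVk.
have Hj : vj (colc D k) (colc D (k + 1)) (colc D (k + 2)) j.
  have : forall jj, jj < 4 -> vj (colc D k) (colc D (k + 1)) (colc D (k + 2)) jj.
    by case/and4P: HVk => H0 H1 H2 H3; case=> [|[|[|[|jj]]]].
  by apply; apply: ltn_ord.
rewrite /vj Hk1 Hk2 Hk0 in Hj.
have Hjl := ltn_ord j.
have Hil := ltn_ord i.
rewrite /CnC4_adj /cart_adj /cycle_adj.
case/or4P: Hj => Hb.
- exists (i, inord ((j + 1) %% 4)); first by rewrite memD inordK ?ltn_mod.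
  apply/orP; left; apply/andP; split => //=.
  rewrite inordK ?ltn_mod //; apply/orP; left; apply/eqP; clear -Hjl; lia.
- exists (i, inord ((j + 3) %% 4)); first by rewrite memD inordK ?ltn_mod.
  apply/orP; left; apply/andP; split => //=.
  rewrite inordK ?ltn_mod //; apply/orP; right; apply/eqP; clear -Hjl; lia.
- exists (inord ((i + m) %% m.+1), j); first by rewrite memD inordK ?ltn_mod.
  apply/orP; right; apply/andP; split => //=.
  rewrite inordK ?ltn_mod //; apply/orP; right; apply/eqP.
  by rewrite modS_mod -addnS modnDr modn_small.
- exists (inord ((i + 1) %% m.+1), j); first by rewrite memD inordK ?ltn_mod.
  apply/orP; right; apply/andP; split => //=.
  by rewrite inordK ?ltn_mod // addn1 eqxx.
Qed.

Lemma sumf_big m F : \sum_(i < m) F (val i) = sumf F m.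
Proof. by elim: m => [|m IH]; rewrite ?big_ord0 // big_ord_recr /= IH. Qed.

Lemma sumf_ext F G n : (forall k, k < n -> F k = G k) -> sumf F n = sumf G n.
Proof.
elim: n => [//|n IH] H /=; rewrite IH ?H // => k Hk; apply: H; exact: ltnW.
Qed.

Lemma card_colc m (D : {set 'I_m.+1 * 'I_4}) :
  #|D| = sumf (fun k => sz (colc D k)) m.+1.
Proof.
have -> : #|D| = \sum_(i < m.+1) \sum_(j < 4) (if (i, j) \in D then 1 else 0).
  rewrite pair_bigA /= -sum1_card big_mkcond /=.
  by apply: eq_bigr => -[i j] _.
rewrite -sumf_big; apply: eq_bigr => i _.
have -> : sz (colc D i) = sumf (fun j => bit (colc D i) j) 4 by rewrite /sz /= add0n.
rewrite -sumf_big; apply: eq_bigr => j _.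
by rewrite memD; case: bit.
Qed.

Definition Pf' (r : nat) : nat := nth 0 [:: 0; 3; 0; 12] r.
Definition Pf (i : nat) : nat := Pf' (i %% 4).
Definition lastc (r : nat) : nat := if r == 2 then 15 else 12.
Definition w (m i : nat) : nat := if i == m then lastc (m.+1 %% 4) else Pf i.
Definition D0 m : {set 'I_m.+1 * 'I_4} := [set x : 'I_m.+1 * 'I_4 | bit (w m x.1) x.2].

Lemma mod4_cases (Q : nat -> bool) : Q 0 -> Q 1 -> Q 2 -> Q 3 -> forall i, Q (i %% 4).
Proof.
move=> H0 H1 H2 H3 i; have : i %% 4 < 4 by rewrite ltn_mod.
by case: (i %% 4) => [|[|[|[|r]]]].
Qed.

Lemma w_in m i : w m i \in [:: 0; 3; 12; 15].
Proof.
rewrite /w; case: ifP => _; first by rewrite /lastc; case: ifP.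
exact: (@mod4_cases (fun r => Pf' r \in [:: 0; 3; 12; 15]) isT isT isT isT i).
Qed.

Lemma w_lt m i : w m i < 16.
Proof. by have := w_in m i; rewrite !inE => /or4P [] /eqP ->. Qed.

Lemma code_bit c : c < 16 -> code (bit c) = c.
Proof.
have H : all (fun c => code (bit c) == c) (iota 0 16) by [].
by move=> Hc; move/allP: H => /(_ c); rewrite mem_iota Hc => /(_ isT) /eqP.
Qed.

Lemma colcD0 m k : colc (D0 m) k = w m (k %% m.+1).
Proof.
rewrite /colc /code !inE /= !inordK ?ltn_mod //.
exact: (code_bit (w_lt m (k %% m.+1))).
Qed.

Lemma PfD i d : Pf (i + d) = Pf' ((i %% 4 + d) %% 4).
Proof. by rewrite /Pf modnDml. Qed.

Lemma FA i : validn (Pf i) (Pf (i + 1)) (Pf (i + 2)).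
Proof.
rewrite !PfD /Pf.
by apply: (@mod4_cases (fun r => validn (Pf' r) (Pf' ((r + 1) %% 4)) (Pf' ((r + 2) %% 4)))).
Qed.

Lemma FB i : validn (Pf i) (Pf (i + 1)) (lastc ((i + 3) %% 4)).
Proof.
rewrite !PfD /Pf; have -> : (i + 3) %% 4 = (i %% 4 + 3) %% 4 by rewrite modnDml.
by apply: (@mod4_cases (fun r => validn (Pf' r) (Pf' ((r + 1) %% 4)) (lastc ((r + 3) %% 4)))).
Qed.

Lemma FC i : validn (Pf i) (lastc ((i + 2) %% 4)) (Pf 0).
Proof.
rewrite /Pf; have -> : (i + 2) %% 4 = (i %% 4 + 2) %% 4 by rewrite modnDml.
by apply: (@mod4_cases (fun r => validn (Pf' r) (lastc ((r + 2) %% 4)) (Pf' (0 %% 4)))).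
Qed.

Lemma FD r : validn (lastc r) (Pf 0) (Pf 1).
Proof. by rewrite /lastc; case: ifP. Qed.

Lemma D0_valid m : 2 <= m -> forall k,
  validn (colc (D0 m) k) (colc (D0 m) (k + 1)) (colc (D0 m) (k + 2)).
Proof.
move=> Hm k; rewrite !colcD0.
have Ha : k %% m.+1 < m.+1 by rewrite ltn_mod.
have E1 : (k + 1) %% m.+1 = (k %% m.+1 + 1) %% m.+1 by rewrite modnDml.
have E2 : (k + 2) %% m.+1 = (k %% m.+1 + 2) %% m.+1 by rewrite modnDml.
rewrite E1 E2; move: Ha; set a := k %% m.+1 => Ha.
case: (ltnP (a + 2) m.+1) => H2.
  rewrite !modn_small //; last by lia.
  rewrite /w.
  have -> : (a == m) = false by apply/eqP; lia.
  have -> : (a + 1 == m) = false by apply/eqP; lia.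
  case: eqP => Hm2; last exact: FA.
  have -> : m.+1 = a + 3 by lia.
  exact: FB.
case: (ltnP (a + 1) m.+1) => H1.
  have Ea : a + 2 = m.+1 by lia.
  rewrite Ea modnn modn_small //.
  rewrite /w.
  have -> : (a == m) = false by apply/eqP; lia.
  have -> : (a + 1 == m) = true by apply/eqP; lia.
  have -> : (0 == m) = false by apply/eqP; lia.
  rewrite -Ea; exact: FC.
have Ea : a = m by lia.
rewrite Ea.
have -> : (m + 1) %% m.+1 = 0 by rewrite addn1 modnn.
have -> : (m + 2) %% m.+1 = 1.
  have -> : m + 2 = 1 + m.+1 by clear; lia.
  by rewrite modnDr modn_small //; lia.
rewrite /w eqxx.
have -> : (0 == m) = false by apply/eqP; lia.
have -> : (1 == m) = false by apply/eqP; lia.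
exact: FD.
Qed.

Lemma sumPf j : sumf (fun k => sz (Pf k)) j = 2 * (j %/ 2).
Proof.
elim: j => [//|j IH] /=; rewrite IH.
have H : sz (Pf j) = 2 * ((j %% 4) %% 2).
  by apply/eqP; apply: (@mod4_cases (fun r => sz (Pf' r) == 2 * (r %% 2))).
rewrite H; clear; lia.
Qed.

Lemma card_D0 m : 2 <= m -> #|D0 m| = gamma_value m.+1.
Proof.
move=> Hm; rewrite card_colc.
rewrite (@sumf_ext _ (fun k => sz (w m k))); last by move=> k Hk; rewrite colcD0 modn_small.
rewrite /= (@sumf_ext _ (fun k => sz (Pf k))); last first.
  by move=> k Hk; rewrite /w; have -> : (k == m) = false by apply/eqP; lia.
rewrite sumPf /w eqxx /gamma_value /lastc.
have Hr : m.+1 %% 4 < 4 by rewrite ltn_mod.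
have S15 : sz 15 = 4 by [].
have S12 : sz 12 = 2 by [].
case E2 : (m.+1 %% 4 == 2); case E0 : (m.+1 %% 4 == 0); rewrite ?S15 ?S12;
  move/eqP: E2; move/eqP: E0; clear -Hr; lia.
Qed.

Definition flip (j : 'I_4) : 'I_4 := inord (nth 0 [:: 1; 0; 3; 2] j).

Lemma flipE (j : 'I_4) : nat_of_ord (flip j) = nth 0 [:: 1; 0; 3; 2] j.
Proof. by rewrite /flip inordK //; case: j => [[|[|[|[|j]]]] Hj]. Qed.

Lemma D0_paired m : 2 <= m -> paired_dominating (@CnC4_adj m.+1) (D0 m).
Proof.
move=> Hm; have HT := valid_total (D0_valid Hm).
split; first by move=> v _; exact: HT v.
exists (fun x => (x.1, flip x.2)) => -[i j] /=; rewrite !inE /= => Hin.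
have Hw := w_in m i.
split.
- move: Hin; rewrite flipE.
  move: Hw; rewrite !inE => /or4P [] /eqP ->;
  by case: j => [[|[|[|[|j]]]] Hj].
- rewrite /CnC4_adj /cart_adj /= eqxx /= /cycle_adj flipE; clear Hin.
  by case: j => [[|[|[|[|j]]]] Hj].
- congr pair; apply: ord_inj; rewrite !flipE; clear Hin.
  by case: j => [[|[|[|[|j]]]] Hj].
Qed.

Lemma paired_total n (D : {set 'I_n * 'I_4}) :
  paired_dominating (@CnC4_adj n) D -> total_dominating (@CnC4_adj n) D.
Proof.
move=> [Hout [mt Hm]] v.
case: (boolP (v \in D)) => Hv; last exact: Hout.
by have [H1 H2 _] := Hm v Hv; exists (mt v).
Qed.

Theorem theorem4p1 (n : nat) : 3 <= n ->
  is_min_card (total_dominating (@CnC4_adj n)) (gamma_value n) /\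
  is_min_card (paired_dominating (@CnC4_adj n)) (gamma_value n).
Proof.
case: n => [//|m] Hn.
have Hm : 2 <= m by [].
have Hlow : forall D, total_dominating (@CnC4_adj m.+1) D -> gamma_value m.+1 <= #|D|.
  move=> D HT; rewrite card_colc; apply: walk.
  - by move=> k; apply: code_lt.
  - by move=> k; apply: colc_eqmod; rewrite modnDr.
  - exact: total_valid.
have HP := D0_paired Hm.
have HC := card_D0 Hm.
split; split.
- by exists (D0 m); split => //; apply: paired_total.
- exact: Hlow.
- by exists (D0 m).
- by move=> D HD; apply: Hlow; apply: paired_total.
Qed.
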